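(* Consider an underactuated robotic system with configuration $\mathbf{q}=(\mathbf{q}_1,\mathbf{q}_2)\in\mathcal{Q}$, $\mathbf{q}_1\in\mathcal{Q}_1\subset\mathbb{R}^{n_1}$ (actuated), $\mathbf{q}_2\in\mathcal{Q}_2\subset\mathbb{R}^{n_2}$ (passive), with dynamics $$\begin{bmatrix}\mathbf{D}_{11}(\mathbf{q})&\mathbf{D}_{12}(\mathbf{q})\\ \mathbf{D}_{21}(\mathbf{q})&\mathbf{D}_{22}(\mathbf{q})\end{bmatrix}\begin{bmatrix}\ddot{\mathbf{q}}_1\\ \ddot{\mathbf{q}}_2\end{bmatrix}+\begin{bmatrix}\mathbf{H}_1(\mathbf{q},\dot{\mathbf{q}})\\ \mathbf{H}_2(\mathbf{q},\dot{\mathbf{q}})\end{bmatrix}=\begin{bmatrix}\mathbf{B}_1\\ \mathbf{0}\end{bmatrix}\mathbf{u},\qquad \mathbf{u}\in\mathbb{R}^m,$$ and let $\dot{\mathbf{x}}=\mathbf{f}(\mathbf{x})+\mathbf{g}(\mathbf{x})\mathbf{u}$, $\mathbf{x}=(\mathbf{q},\dot{\mathbf{q}})$, be its control affine form, $\mathbf{f}(\mathbf{x})=(\dot{\mathbf{q}},-\mathbf{D}(\mathbf{q})^{-1}\mathbf{H}(\mathbf{q},\dot{\mathbf{q}}))$, $\mathbf{g}(\mathbf{x})=(\mathbf{0},\mathbf{D}(\mathbf{q})^{-1}\mathbf{B})$. Let $h_{0,1}:\mathcal{Q}_1\to\mathbb{R}$ be continuously differentiable, defining $\mathcal{C}_0=\{\mathbf{q}\in\mathcal{Q}:h_{0,1}(\mathbf{q}_1)\ge0\}$.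 Suppose $\mathbf{B}_1\in\mathbb{R}^{n_1\times m}$ is pseudo-invertible and $\mathbf{k}_{0,1}:\mathcal{Q}_1\to\mathbb{R}^{n_1}$ is continuously differentiable with $\nabla h_{0,1}(\mathbf{q}_1)\cdot\mathbf{k}_{0,1}(\mathbf{q}_1)>-\alpha(h_{0,1}(\mathbf{q}_1))$ for all $\mathbf{q}_1\in\mathcal{Q}_1$, for some extended class $\mathcal{K}_\infty$ function $\alpha$. For $\mu>0$ let $$h(\mathbf{q},\dot{\mathbf{q}})=h_{0,1}(\mathbf{q}_1)-\frac{1}{2\mu}(\dot{\mathbf{q}}_1-\mathbf{k}_{0,1}(\mathbf{q}_1))^\top\bar{\mathbf{D}}_1(\mathbf{q})(\dot{\mathbf{q}}_1-\mathbf{k}_{0,1}(\mathbf{q}_1)),$$ where $\bar{\mathbf{D}}_1(\mathbf{q})=\mathbf{D}_{11}(\mathbf{q})-\mathbf{D}_{12}(\mathbf{q})\mathbf{D}_{22}(\mathbf{q})^{-1}\mathbf{D}_{21}(\mathbf{q})$. Then $h$ is a control barrier function for $\dot{\mathbf{x}}=\mathbf{f}(\mathbf{x})+\mathbf{g}(\mathbf{x})\mathbf{u}$ on $\mathcal{C}=\{(\mathbf{q},\dot{\mathbf{q}}):h(\mathbf{q},\dot{\mathbf{q}})\ge0\}$.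
   Context: $\mathbf{D}(\mathbf{q})$ (the block matrix) is the symmetric positive definite, continuously differentiable inertia matrix, so $\mathbf{D}_{22}$ and the Schur complement $\bar{\mathbf{D}}_1$ are positive definite; $\mathbf{H}=\mathbf{C}\dot{\mathbf{q}}+\mathbf{G}$ collects Coriolis and gravity terms. ''Pseudo-invertible'' is used in the sense that $\mathbf{v}^\top\mathbf{B}_1=\mathbf{0}$ implies $\mathbf{v}=\mathbf{0}$ (full row rank). An extended class $\mathcal{K}_\infty$ function is a continuous strictly increasing $\alpha:\mathbb{R}\to\mathbb{R}$ with $\alpha(0)=0$, $\alpha(s)\to\pm\infty$ as $s\to\pm\infty$. With $L_{\mathbf{f}}h=\nabla h\cdot\mathbf{f}$, $L_{\mathbf{g}}h=\nabla h^\top\mathbf{g}$, a continuously differentiable $h$ is a CBF on $\{h\ge0\}$ if there exists an extended class $\mathcal{K}_\infty$ function $\alpha$ such that for all states $\mathbf{x}$, $\sup_{\mathbf{u}\in\mathbb{R}^m}\{L_{\mathbf{f}}h(\mathbf{x})+L_{\mathbf{g}}h(\mathbf{x})\mathbf{u}\}>-\alpha(h(\mathbf{x}))$. *)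

(* Defs.v *)
From HB Require Import structures.
From mathcomp Require Import all_boot all_order all_algebra.
From mathcomp Require Import all_classical all_reals all_analysis.
Set Implicit Arguments. Unset Strict Implicit. Unset Printing Implicit Defensive.
Import Order.TTheory GRing.Theory Num.Theory.
Import numFieldNormedType.Exports.
Local Open Scope classical_set_scope.
Local Open Scope ring_scope.

(* f is continuously differentiable on U: Frechet differentiable at every point
   of U, and every directional derivative x |-> 'd f x v is continuous on U
   (in finite dimension this is continuity of the derivative). *)
Definition C1_on {R : realType} {V W : normedModType R} (U : set V) (f : V -> W)
  : Prop :=
  (forall x, U x -> differentiable f x) /\
  (forall v : V, {within U, continuous (fun x => 'd f x v)}).

Definition ext_class_Kinf {R : realType} (alpha : R -> R) : Prop :=
  continuous alpha /\
  (forall x y, x < y -> alpha x < alpha y) /\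
  alpha 0 = 0 /\
  (alpha x @[x --> +oo] --> +oo) /\
  (alpha x @[x --> -oo] --> -oo).

Definition sym_posdef {R : realType} {n : nat} (M : 'M[R]_n) : Prop :=
  M^T = M /\ forall v : 'cV[R]_n, v != 0 -> 0 < (v^T *m M *m v) 0 0.

(* pseudo-invertible in the sense of full row rank: v^T B1 = 0 -> v = 0 *)
Definition pseudo_invertible {R : realType} {n m : nat} (B : 'M[R]_(n, m)) : Prop :=
  forall v : 'rV[R]_n, v *m B = 0 -> v = 0.

Definition Lie_f {R : realType} {N : nat} (h : 'cV[R]_N -> R)
  (f : 'cV[R]_N -> 'cV[R]_N) (x : 'cV[R]_N) : R := 'd h x (f x).
Definition Lie_g {R : realType} {N m : nat} (h : 'cV[R]_N -> R)
  (g : 'cV[R]_N -> 'M[R]_(N, m)) (x : 'cV[R]_N) (u : 'cV[R]_m) : R :=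
  'd h x (g x *m u).

Definition is_CBF {R : realType} {N m : nat} (X : set 'cV[R]_N)
  (f : 'cV[R]_N -> 'cV[R]_N) (g : 'cV[R]_N -> 'M[R]_(N, m))
  (h : 'cV[R]_N -> R) : Prop :=
  C1_on X h /\
  exists alpha : R -> R, ext_class_Kinf alpha /\
    forall x, X x ->
      ((- alpha (h x))%:E <
        ereal_sup [set (Lie_f h f x + Lie_g h g x u)%:E | u in [set: 'cV[R]_m]])%E.

(* configuration q = col_mx q1 q2 : 'cV_(n1 + n2); state x = col_mx q qdot *)
Definition cfg_dom {R : realType} {n1 n2 : nat} (Q1 : set 'cV[R]_n1)
  (Q2 : set 'cV[R]_n2) : set 'cV[R]_(n1 + n2) :=
  [set q | Q1 (usubmx q) /\ Q2 (dsubmx q)].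

Definition state_dom {R : realType} {n1 n2 : nat} (Q1 : set 'cV[R]_n1)
  (Q2 : set 'cV[R]_n2) : set 'cV[R]_((n1 + n2) + (n1 + n2)) :=
  [set x | cfg_dom Q1 Q2 (usubmx x)].

Definition Dbar1 {R : realType} {n1 n2 : nat} (M : 'M[R]_(n1 + n2)) : 'M[R]_n1 :=
  ulsubmx M - ursubmx M *m invmx (drsubmx M) *m dlsubmx M.

Definition f_sys {R : realType} {n1 n2 : nat}
  (D : 'cV[R]_(n1 + n2) -> 'M[R]_(n1 + n2))
  (H : 'cV[R]_(n1 + n2) -> 'cV[R]_(n1 + n2) -> 'cV[R]_(n1 + n2))
  (x : 'cV[R]_((n1 + n2) + (n1 + n2))) : 'cV[R]_((n1 + n2) + (n1 + n2)) :=
  col_mx (dsubmx x) (- (invmx (D (usubmx x)) *m H (usubmx x) (dsubmx x))).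

Definition g_sys {R : realType} {n1 n2 m : nat}
  (D : 'cV[R]_(n1 + n2) -> 'M[R]_(n1 + n2)) (B1 : 'M[R]_(n1, m))
  (x : 'cV[R]_((n1 + n2) + (n1 + n2))) : 'M[R]_((n1 + n2) + (n1 + n2), m) :=
  col_mx 0 (invmx (D (usubmx x)) *m col_mx B1 (0 : 'M[R]_(n2, m))).

Definition h_cbf {R : realType} {n1 n2 : nat}
  (D : 'cV[R]_(n1 + n2) -> 'M[R]_(n1 + n2))
  (h01 : 'cV[R]_n1 -> R) (k01 : 'cV[R]_n1 -> 'cV[R]_n1) (mu : R)
  (x : 'cV[R]_((n1 + n2) + (n1 + n2))) : R :=
  let q := usubmx x in
  let e := usubmx (dsubmx x) - k01 (usubmx q) in
  h01 (usubmx q) - (2 * mu)^-1 * (e^T *m Dbar1 (D q) *m e) 0 0.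

(* Main.v *)
Require Import Defs.
From HB Require Import structures.
From mathcomp Require Import all_boot all_order all_algebra.
From mathcomp Require Import all_classical all_reals all_analysis.
From mathcomp Require Import perm lra.
Import Order.TTheory GRing.Theory Num.Theory.
Import numFieldNormedType.Exports.
Local Open Scope classical_set_scope.
Local Open Scope ring_scope.

Section C1frame.
Context {R : realType} {V : normedModType R}.

Definition C1p (U : set V) (f : V -> R) : Prop :=
  (forall x, U x -> differentiable f x) /\
  (forall v x, U x -> {for x, continuous (fun y => 'd f y v)}).

Lemma near_diff (f g : V -> R) x : (\forall y \near x, f y = g y) ->
  differentiable g x -> differentiable f x /\ 'd f x = 'd g x :> (V -> R).
Proof.
move=> Hfg dg.
have fx : f x = g x := nbhs_singleton Hfg.
have sh : (fun h : V => h + x) @ (0 : V) --> x.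
  by rewrite -{2}[x]add0r; apply: cvgD; [exact: cvg_id | exact: cvg_cst].
have Hn : \forall h \near (0:V), f (h + x) = g (h + x) := sh _ Hfg.
have key : f \o shift x = cst (f x) + 'd g x +o_ (0:V) id.
  apply/eqaddoP => eps eps0.
  have /eqaddoP/(_ eps eps0) H := diff_locally dg.
  apply: filterS2 Hn H => h E1 /=.
  by rewrite !fctE /= E1 fx.
have dfe : 'd f x = 'd g x :> (V -> R) := diff_unique (diff_continuous dg) key.
split => //.
apply/diff_locallyP; rewrite dfe; split => //; exact: diff_continuous dg.
Qed.

Lemma U_near (U : set V) x : open U -> U x -> \forall y \near x, U y.
Proof. by move=> oU Ux; apply: open_nbhs_nbhs; split. Qed.

Lemma near_U (U : set V) x (P : V -> Prop) : open U -> U x ->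
  (forall y, U y -> P y) -> \forall y \near x, P y.
Proof.
move=> oU Ux H; near=> y; apply: H; near: y; exact: U_near.
Unshelve. all: by end_near. Qed.

Lemma cont_near (F G : V -> R) x : (\forall y \near x, F y = G y) ->
  {for x, continuous G} -> {for x, continuous F}.
Proof.
move=> H cG; have Fx : F x = G x := nbhs_singleton H.
move: cG; rewrite /prop_for /continuous_at /= => cG. rewrite Fx; apply: cvg_trans _ cG; apply: near_eq_cvg.
by apply: filterS H => y ->.
Qed.

Lemma cont_nearU (U : set V) (F G : V -> R) x : open U -> U x ->
  (forall y, U y -> F y = G y) ->
  {for x, continuous G} -> {for x, continuous F}.
Proof.
move=> oU Ux H; apply: cont_near; near=> y; apply: H; near: y; exact: U_near.
Unshelve. all: by end_near. Qed.

Lemma C1p_ext {U} {f g : V -> R} : C1p U g -> (forall y, f y = g y) -> C1p U f.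
Proof. by move=> + e; rewrite (_ : f = g) //; apply/funext. Qed.

Lemma C1p_sub {U U' : set V} {f} : U `<=` U' -> C1p U' f -> C1p U f.
Proof. by move=> s [d c]; split => [x /s|v x /s]; [exact: d|exact: c]. Qed.

Lemma C1p_eq {U : set V} {f g : V -> R} : open U ->
  (forall y, U y -> f y = g y) -> C1p U g -> C1p U f.
Proof.
move=> oU e [d c].
have N x : U x -> \forall y \near x, f y = g y.
  move=> Ux; near=> y; apply: e; near: y; exact: U_near.
split=> [x Ux|v x Ux]; first exact: (@near_diff f g x (N x Ux) (d x Ux)).1.
apply: (@cont_nearU U _ (fun y => 'd g y v) x oU Ux); last exact: c.
move=> y Uy.
by rewrite (@near_diff f g y (N y Uy) (d y Uy)).2.
Unshelve. all: by end_near. Qed.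

Lemma d_cst (c : R) x v : 'd (fun _ : V => c) x v = 0.
Proof. by rewrite (_ : (fun _ => c) = cst c) // diff_cst. Qed.

Lemma d_add (f g : V -> R) x v : differentiable f x -> differentiable g x ->
  'd (fun y => f y + g y) x v = 'd f x v + 'd g x v.
Proof. by move=> df dg; rewrite (_ : (fun y => _) = f + g) // diffD. Qed.

Lemma d_opp (f : V -> R) x v : differentiable f x ->
  'd (fun y => - f y) x v = - 'd f x v.
Proof. by move=> df; rewrite (_ : (fun y => _) = - f) // diffN. Qed.

Lemma d_mul (f g : V -> R) x v : differentiable f x -> differentiable g x ->
  'd (fun y => f y * g y) x v = f x * 'd g x v + g x * 'd f x v.
Proof. by move=> df dg; rewrite (_ : (fun y => _) = f * g) // diffM. Qed.

Lemma C1p_cst U (c : R) : C1p U (fun _ => c).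
Proof.
split=> [x _|v x _]; first exact: differentiable_cst.
rewrite (_ : (fun y => _) = cst 0); first exact: cvg_cst.
by apply/funext => y; rewrite d_cst.
Qed.

Lemma C1p_add {U} {f g : V -> R} : open U -> C1p U f -> C1p U g ->
  C1p U (fun y => f y + g y).
Proof.
move=> oU [df cf] [dg cg]; split=> [x Ux|v x Ux].
  by rewrite (_ : (fun y => _) = f + g) //; apply: differentiableD; auto.
apply: (@cont_nearU U _ (fun y => 'd f y v + 'd g y v) x oU Ux).
  by move=> y Uy; rewrite d_add; auto.
by apply: cvgD; [exact: cf | exact: cg].
Qed.

Lemma C1p_opp {U} {f : V -> R} : open U -> C1p U f -> C1p U (fun y => - f y).
Proof.
move=> oU [df cf]; split=> [x Ux|v x Ux].
  by rewrite (_ : (fun y => _) = - f) //; apply: differentiableN; auto.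
apply: (@cont_nearU U _ (fun y => - 'd f y v) x oU Ux).
  by move=> y Uy; rewrite d_opp; auto.
by apply: cvgN; exact: cf.
Qed.

Lemma C1p_mul {U} {f g : V -> R} : open U -> C1p U f -> C1p U g ->
  C1p U (fun y => f y * g y).
Proof.
move=> oU [df cf] [dg cg]; split=> [x Ux|v x Ux].
  by rewrite (_ : (fun y => _) = f * g) //; apply: differentiableM; auto.
apply: (@cont_nearU U _ (fun y => f y * 'd g y v + g y * 'd f y v) x oU Ux).
  by move=> y Uy; rewrite d_mul; auto.
apply: cvgD; apply: cvgM; first exact: differentiable_continuous (df x Ux).
- exact: cg.
- exact: differentiable_continuous (dg x Ux).
- exact: cf.
Qed.

Lemma C1p_inv {U} {f : V -> R} : open U -> (forall x, U x -> f x != 0) ->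
  C1p U f -> C1p U (fun y => (f y)^-1).
Proof.
move=> oU nz [df cf]; split=> [x Ux|v x Ux].
  by apply: differentiableV; auto.
apply: (@cont_nearU U _ (fun y => - (f y) ^- 2 * 'd f y v) x oU Ux).
  move=> y Uy.
  by rewrite diffV; auto.
apply: cvgM; last exact: cf.
apply: cvgN; apply: cvgV; first by rewrite expf_neq0 ?nz.
rewrite expr2; apply: cvgM; exact: differentiable_continuous (df x Ux).
Qed.

Lemma C1p_sum U (I : Type) (r : seq I) (P : pred I) (F : I -> V -> R) :
  open U -> (forall i, C1p U (F i)) ->
  C1p U (fun y => \sum_(i <- r | P i) F i y).
Proof.
move=> oU HF; elim: r => [|a r IH].
  by apply: (C1p_ext (C1p_cst U 0)) => y; rewrite big_nil.
case Pa: (P a).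
  by apply: (C1p_ext (C1p_add oU (HF a) IH)) => y; rewrite big_cons Pa.
by apply: (C1p_ext IH) => y; rewrite big_cons Pa.
Qed.

Lemma C1p_prod U (I : Type) (r : seq I) (P : pred I) (F : I -> V -> R) :
  open U -> (forall i, C1p U (F i)) ->
  C1p U (fun y => \prod_(i <- r | P i) F i y).
Proof.
move=> oU HF; elim: r => [|a r IH].
  by apply: (C1p_ext (C1p_cst U 1)) => y; rewrite big_nil.
case Pa: (P a).
  by apply: (C1p_ext (C1p_mul oU (HF a) IH)) => y; rewrite big_cons Pa.
by apply: (C1p_ext IH) => y; rewrite big_cons Pa.
Qed.

Lemma d_sum (I : Type) (r : seq I) (F : I -> V -> R) x v :
  (forall i, differentiable (F i) x) ->
  'd (fun y => \sum_(i <- r) F i y) x v = \sum_(i <- r) 'd (F i) x v.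
Proof.
move=> HF; elim: r => [|a r IH].
  by rewrite big_nil (_ : (fun y => _) = cst 0) ?diff_cst //; apply/funext => y; rewrite big_nil.
have dr : differentiable (fun y => \sum_(i <- r) F i y) x.
  elim: (r) => [|b s IHs].
    by rewrite (_ : (fun y => _) = cst 0) //; apply/funext => y; rewrite big_nil.
  rewrite (_ : (fun y => _) = F b + (fun y => \sum_(i <- s) F i y)).
    exact: differentiableD.
  by apply/funext => y; rewrite big_cons.
rewrite (_ : (fun y => _) = (fun y => F a y + \sum_(i <- r) F i y)).
  by rewrite d_add // IH big_cons.
by apply/funext => y; rewrite big_cons.
Qed.

End C1frame.

Lemma continuous_usubmx {R : numFieldType} m1 m2 n :
  continuous (usubmx : 'M[R]_(m1 + m2, n) -> 'M[R]_(m1, n)).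
Proof.
move=> u A /nbhs_ballP[e /= e0 eA].
apply/nbhs_ballP; exists e => //= v [_ uv]; apply: eA; split => // i j.
by apply: (le_lt_trans _ (uv (lshift m2 i) j)); rewrite !mxE.
Qed.

Lemma continuous_dsubmx {R : numFieldType} m1 m2 n :
  continuous (dsubmx : 'M[R]_(m1 + m2, n) -> 'M[R]_(m2, n)).
Proof.
move=> u A /nbhs_ballP[e /= e0 eA].
apply/nbhs_ballP; exists e => //= v [_ uv]; apply: eA; split => // i j.
by apply: (le_lt_trans _ (uv (rshift m1 i) j)); rewrite !mxE.
Qed.

Section coordf.
Context {R : realType}.
Definition coordf {m n : nat} (i : 'I_m) (j : 'I_n) (M : 'M[R]_(m,n)) : R := M i j.
Lemma coordf_lin {m n} (i : 'I_m) (j : 'I_n) : linear (coordf i j).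
Proof. by move=> a A B; rewrite /coordf !mxE. Qed.
HB.instance Definition _ m n i j :=
  GRing.isLinear.Build R 'M[R]_(m,n) R _ (@coordf m n i j) (coordf_lin i j).
End coordf.

Section Lin.
Context {R : realType}.

Definition Ldiff {V W : normedModType R} (L : V -> W) : Prop :=
  [/\ (forall x, differentiable L x), (forall x w, 'd L x w = L w) & continuous L].

Lemma Ldiff_lin {V W : normedModType R} (L : {linear V -> W}) :
  continuous L -> Ldiff L.
Proof.
move=> cL; split => [x|x w|//]; first exact: linear_differentiable.
by rewrite diff_lin.
Qed.

Lemma Ldiff_comp {U V W : normedModType R} (L1 : U -> V) (L2 : V -> W) :
  Ldiff L1 -> Ldiff L2 -> Ldiff (L2 \o L1).
Proof.
move=> [d1 e1 c1] [d2 e2 c2]; split => [x|x w|].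
- exact: differentiable_comp.
- by rewrite diff_comp //= e1 e2.
- by move=> x; apply: continuous_comp; [exact: c1|exact: c2].
Qed.

Lemma Ldiff_usubmx m1 m2 n : Ldiff (@usubmx R m1 m2 n).
Proof. exact: (@Ldiff_lin _ _ (@usubmx R m1 m2 n : {linear 'M[R]_(m1+m2,n) -> 'M[R]_(m1,n)}) (@continuous_usubmx R m1 m2 n)). Qed.

Lemma Ldiff_dsubmx m1 m2 n : Ldiff (@dsubmx R m1 m2 n).
Proof. exact: (@Ldiff_lin _ _ (@dsubmx R m1 m2 n : {linear 'M[R]_(m1+m2,n) -> 'M[R]_(m2,n)}) (@continuous_dsubmx R m1 m2 n)). Qed.

Lemma Ldiff_coord {m n} (i : 'I_m) (j : 'I_n) : Ldiff (@coordf R m n i j).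
Proof. exact: (@Ldiff_lin _ _ (@coordf R m n i j : {linear 'M[R]_(m,n) -> R}) (@coord_continuous R m n i j)). Qed.

Lemma C1p_comp {V W : normedModType R} (Q : set W) (U : set V) (phi : W -> R)
  (L : V -> W) : open U -> (forall y, U y -> Q (L y)) -> Ldiff L ->
  C1p Q phi -> C1p U (fun y => phi (L y)).
Proof.
move=> oU UQ [dL eL cL] [dp cp].
rewrite (_ : (fun y => _) = phi \o L) //.
have E y : U y -> 'd (phi \o L) y = 'd phi (L y) \o 'd L y :> (V -> R).
  by move=> Uy; rewrite diff_comp //; apply: dp; apply: UQ.
split => [x Ux|v x Ux].
  by apply: differentiable_comp => //; apply: dp; apply: UQ.
apply: (@cont_nearU _ _ U _ (fun y => 'd phi (L y) (L v)) x oU Ux).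
  by move=> y Uy; rewrite E //= eL.
have := @continuous_comp _ _ _ L (fun z => 'd phi z (L v)) x (cL x).
by apply; apply: cp; apply: UQ.
Qed.

Lemma C1p_coord {m n} (i : 'I_m) (j : 'I_n) : C1p setT (@coordf R m n i j).
Proof.
have [d e c] := Ldiff_coord i j.
split => [x _|v x _]; first exact: d.
rewrite (_ : (fun y => _) = cst (coordf i j v)); first exact: cst_continuous.
by apply/funext => y; rewrite e.
Qed.

Definition C1mx {V : normedModType R} {a b : nat} (U : set V)
  (M : V -> 'M[R]_(a, b)) : Prop := forall i j, C1p U (fun y => M y i j).

Lemma C1mx_L {V : normedModType R} {a b} (U : set V) (L : V -> 'M[R]_(a,b)) :
  open U -> Ldiff L -> C1mx U L.
Proof.
move=> oU HL i j.
exact: (@C1p_comp _ _ setT U (@coordf R a b i j) L oU (fun _ _ => I) HL (C1p_coord i j)).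
Qed.

Lemma C1mx_comp {V W : normedModType R} {a b} (Q : set W) (U : set V)
  (Phi : W -> 'M[R]_(a, b)) (L : V -> W) : open U ->
  (forall y, U y -> Q (L y)) -> Ldiff L -> C1mx Q Phi ->
  C1mx U (fun y => Phi (L y)).
Proof.
move=> oU UQ HL HP i j.
exact: (@C1p_comp _ _ Q U (fun z => Phi z i j) L oU UQ HL (HP i j)).
Qed.

Lemma C1_on_C1p {V : normedModType R} (Q : set V) (phi : V -> R) :
  open Q -> C1_on Q phi -> C1p Q phi.
Proof.
move=> oQ [d c]; split => [x Qx|v x Qx]; first exact: d.
have := c v; rewrite continuous_open_subspace //; apply.
by rewrite inE.
Qed.

Lemma C1_on_C1mx {V : normedModType R} {a b} (Q : set V)
  (Phi : V -> 'M[R]_(a, b)) : open Q -> C1_on Q Phi -> C1mx Q Phi.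
Proof.
move=> oQ [d c] i j.
have [dc ec cc] := Ldiff_coord i j.
have E y : Q y -> 'd (coordf i j \o Phi) y = coordf i j \o 'd Phi y :> (V -> R).
  move=> Qy; rewrite diff_comp; [|exact: d|exact: dc]; by rewrite funeqE => w /=; rewrite ec.
rewrite (_ : (fun y => _) = coordf i j \o Phi) //.
split => [x Qx|v x Qx].
  by apply: differentiable_comp => //; apply: d.
apply: (@cont_nearU _ _ Q _ (fun y => coordf i j ('d Phi y v)) x oQ Qx).
  by move=> y Qy; rewrite E.
apply: (@continuous_comp _ _ _ (fun y => 'd Phi y v) (coordf i j) x).
  by have := c v; rewrite continuous_open_subspace //; apply; rewrite inE.
exact: cc.
Qed.

End Lin.

Section MxAlg.
Context {R : realType} {V : normedModType R} (U : set V) (oU : open U).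

Lemma C1mx_cst a b (A : 'M[R]_(a, b)) : C1mx U (fun _ => A).
Proof. by move=> i j; apply: C1p_cst. Qed.

Lemma C1mx_add a b (M N : V -> 'M[R]_(a, b)) : C1mx U M -> C1mx U N ->
  C1mx U (fun y => M y + N y).
Proof.
move=> HM HN i j; apply: (C1p_ext (C1p_add oU (HM i j) (HN i j))) => y.
by rewrite mxE.
Qed.

Lemma C1mx_opp a b (M : V -> 'M[R]_(a, b)) : C1mx U M -> C1mx U (fun y => - M y).
Proof.
move=> HM i j; apply: (C1p_ext (C1p_opp oU (HM i j))) => y.
by rewrite mxE.
Qed.

Lemma C1mx_sub a b (M N : V -> 'M[R]_(a, b)) : C1mx U M -> C1mx U N ->
  C1mx U (fun y => M y - N y).
Proof. by move=> HM HN; apply: C1mx_add => //; apply: C1mx_opp. Qed.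

Lemma C1mx_mul a b c (M : V -> 'M[R]_(a, b)) (N : V -> 'M[R]_(b, c)) :
  C1mx U M -> C1mx U N -> C1mx U (fun y => M y *m N y).
Proof.
move=> HM HN i j.
have := C1p_sum U _ (index_enum 'I_b) xpredT (fun k y => M y i k * N y k j) oU
  (fun k => C1p_mul oU (HM i k) (HN k j)).
by move/C1p_ext; apply => y; rewrite mxE.
Qed.

Lemma C1mx_tr a b (M : V -> 'M[R]_(a, b)) : C1mx U M -> C1mx U (fun y => (M y)^T).
Proof. by move=> HM i j; apply: (C1p_ext (HM j i)) => y; rewrite !mxE. Qed.

Lemma C1mx_ul a1 a2 b1 b2 (M : V -> 'M[R]_(a1 + a2, b1 + b2)) :
  C1mx U M -> C1mx U (fun y => ulsubmx (M y)).
Proof. by move=> HM i j; apply: (C1p_ext (HM (lshift a2 i) (lshift b2 j))) => y; rewrite !mxE. Qed.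
Lemma C1mx_ur a1 a2 b1 b2 (M : V -> 'M[R]_(a1 + a2, b1 + b2)) :
  C1mx U M -> C1mx U (fun y => ursubmx (M y)).
Proof. by move=> HM i j; apply: (C1p_ext (HM (lshift a2 i) (rshift b1 j))) => y; rewrite !mxE. Qed.
Lemma C1mx_dl a1 a2 b1 b2 (M : V -> 'M[R]_(a1 + a2, b1 + b2)) :
  C1mx U M -> C1mx U (fun y => dlsubmx (M y)).
Proof. by move=> HM i j; apply: (C1p_ext (HM (rshift a1 i) (lshift b2 j))) => y; rewrite !mxE. Qed.
Lemma C1mx_dr a1 a2 b1 b2 (M : V -> 'M[R]_(a1 + a2, b1 + b2)) :
  C1mx U M -> C1mx U (fun y => drsubmx (M y)).
Proof. by move=> HM i j; apply: (C1p_ext (HM (rshift a1 i) (rshift b1 j))) => y; rewrite !mxE. Qed.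
Lemma C1mx_u a1 a2 b (M : V -> 'M[R]_(a1 + a2, b)) :
  C1mx U M -> C1mx U (fun y => usubmx (M y)).
Proof. by move=> HM i j; apply: (C1p_ext (HM (lshift a2 i) j)) => y; rewrite !mxE. Qed.
Lemma C1mx_d a1 a2 b (M : V -> 'M[R]_(a1 + a2, b)) :
  C1mx U M -> C1mx U (fun y => dsubmx (M y)).
Proof. by move=> HM i j; apply: (C1p_ext (HM (rshift a1 i) j)) => y; rewrite !mxE. Qed.

Lemma C1p_det n (M : V -> 'M[R]_n) : C1mx U M -> C1p U (fun y => \det (M y)).
Proof.
move=> HM.
have := C1p_sum U _ (index_enum 'S_n) xpredT
  (fun s y => (-1) ^+ perm.odd_perm s * \prod_i M y i (s i)) oU
  (fun s => C1p_mul oU (C1p_cst U _)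
     (C1p_prod U _ (index_enum 'I_n) xpredT (fun i y => M y i (s i)) oU
        (fun i => HM i (s i)))).
by move/C1p_ext; apply => y.
Qed.

Lemma C1mx_rowcol' n (M : V -> 'M[R]_n.+1) i0 j0 :
  C1mx U M -> C1mx U (fun y => row' i0 (col' j0 (M y))).
Proof. by move=> HM i j; apply: (C1p_ext (HM (lift i0 i) (lift j0 j))) => y; rewrite !mxE. Qed.

Lemma C1mx_adj n (M : V -> 'M[R]_n) : C1mx U M -> C1mx U (fun y => \adj (M y)).
Proof.
case: n M => [|n] M HM i j; first by case: i.
apply: (C1p_ext (C1p_mul oU (C1p_cst U ((-1) ^+ (j + i)))
  (C1p_det _ _ (C1mx_rowcol' _ _ j i HM)))) => y.
by rewrite mxE.
Qed.

Lemma C1mx_inv n (M : V -> 'M[R]_n) : (forall y, U y -> M y \in unitmx) ->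
  C1mx U M -> C1mx U (fun y => invmx (M y)).
Proof.
move=> Hu HM i j.
have Hd : C1p U (fun y => (\det (M y))^-1).
  apply: C1p_inv => //; last exact: C1p_det.
  by move=> y Uy; rewrite -unitfE -unitmxE; apply: Hu.
apply: (C1p_eq oU _ (C1p_mul oU Hd (C1mx_adj _ _ HM i j))) => y Uy.
by rewrite /invmx Hu // mxE.
Qed.

End MxAlg.

Section LinAlg.
Context {R : realType}.

Definition quadpos {n} (A : 'M[R]_n) :=
  forall v : 'cV[R]_n, v != 0 -> 0 < (v^T *m A *m v) 0 0.

Lemma quadpos_unit n (A : 'M[R]_n) : quadpos A -> A \in unitmx.
Proof.
move=> H; rewrite unitmxE unitfE; apply/negP => /det0P [r r0 rA].
have nz : r^T != 0.
  by apply: contra r0 => /eqP h; rewrite -[r]trmxK h trmx0.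
by have := H _ nz; rewrite trmxK rA mul0mx mxE ltxx.
Qed.

Lemma quadpos_dr n1 n2 (A : 'M[R]_(n1 + n2)) : quadpos A -> quadpos (drsubmx A).
Proof.
move=> H v2 nz.
have E : (col_mx 0 v2)^T *m A *m col_mx 0 v2 = v2^T *m drsubmx A *m v2.
  rewrite -{1}[A]submxK tr_col_mx trmx0 mul_row_block !mul0mx !add0r.
  by rewrite mul_row_col mulmx0 add0r.
rewrite -E; apply: H.
by rewrite col_mx_eq0 eqxx.
Qed.

Lemma Dbar1_sym n1 n2 (A : 'M[R]_(n1 + n2)) : A^T = A -> (Dbar1 A)^T = Dbar1 A.
Proof.
move=> hA; rewrite /Dbar1 linearB /= !trmx_mul trmx_inv.
by rewrite trmx_ulsub trmx_ursub trmx_dlsub trmx_drsub hA mulmxA.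
Qed.

Lemma schur n1 n2 (A : 'M[R]_(n1 + n2)) (v : 'cV[R]_n1) :
  A \in unitmx -> drsubmx A \in unitmx ->
  Dbar1 A *m usubmx (invmx A *m col_mx v (0 : 'cV[R]_n2)) = v.
Proof.
move=> uA uD.
set z := invmx A *m col_mx v 0.
have Az : A *m z = col_mx v 0 by rewrite /z mulmxA mulmxV // mul1mx.
move: Az; rewrite -{1}[A]submxK -{1}[z]vsubmxK mul_block_col.
move=> /eq_col_mx [E1 E2].
have E3 : drsubmx A *m dsubmx z = - (dlsubmx A *m usubmx z).
  by apply/eqP; rewrite -addr_eq0 addrC E2.
have dz : dsubmx z = - (invmx (drsubmx A) *m dlsubmx A *m usubmx z).
  by rewrite -(mulKmx uD (dsubmx z)) E3 mulmxN mulmxA.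
by rewrite -E1 dz mulmxN /Dbar1 mulmxBl !mulmxA.
Qed.

End LinAlg.

Section Helpers.
Context {R : realType} {V : normedModType R}.

Lemma d_comp {W : normedModType R} (phi : W -> R) (L : V -> W) x w :
  differentiable phi (L x) -> Ldiff L ->
  differentiable (fun y => phi (L y)) x /\
  'd (fun y => phi (L y)) x w = 'd phi (L x) (L w).
Proof.
move=> dp [dL eL cL]; rewrite (_ : (fun y => _) = phi \o L) //.
split; first exact: differentiable_comp.
by rewrite diff_comp //= eL.
Qed.

Lemma diff_sumf (I : Type) (r : seq I) (F : I -> V -> R) x :
  (forall i, differentiable (F i) x) ->
  differentiable (fun y => \sum_(i <- r) F i y) x.
Proof.
move=> HF; elim: r => [|b s IHs].
  by rewrite (_ : (fun y => _) = cst 0) //; apply/funext => y; rewrite big_nil.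
rewrite (_ : (fun y => _) = F b + (fun y => \sum_(i <- s) F i y)).
  exact: differentiableD.
by apply/funext => y; rewrite big_cons.
Qed.

Lemma d_quad n (Ef : 'I_n -> V -> R) (Mf : 'I_n -> 'I_n -> V -> R) x w :
  (forall i, differentiable (Ef i) x) -> (forall i j, differentiable (Mf i j) x) ->
  differentiable (fun y => \sum_j (\sum_i Ef i y * Mf i j y) * Ef j y) x /\
  'd (fun y => \sum_j (\sum_i Ef i y * Mf i j y) * Ef j y) x w =
  \sum_j ((\sum_i Ef i x * Mf i j x) * 'd (Ef j) x w +
          Ef j x * \sum_i (Ef i x * 'd (Mf i j) x w + Mf i j x * 'd (Ef i) x w)).
Proof.
move=> dE dM.
have dP j : differentiable (fun y => \sum_i Ef i y * Mf i j y) x.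
  apply: (@diff_sumf _ _ (fun i y => Ef i y * Mf i j y)) => i.
  by rewrite (_ : (fun y => _) = Ef i * Mf i j) //; apply: differentiableM.
have dT j : differentiable (fun y => (\sum_i Ef i y * Mf i j y) * Ef j y) x.
  rewrite (_ : (fun y => _) = (fun y => \sum_i Ef i y * Mf i j y) * Ef j) //.
  exact: differentiableM.
split; first exact: (@diff_sumf _ _ (fun j y => (\sum_i Ef i y * Mf i j y) * Ef j y)).
rewrite (@d_sum R V _ _ (fun j y => (\sum_i Ef i y * Mf i j y) * Ef j y)) //.
apply: eq_bigr => j _.
rewrite (@d_mul R V (fun y => \sum_i Ef i y * Mf i j y)) //.
congr (_ + _); congr (_ * _).
rewrite (@d_sum R V _ _ (fun i y => Ef i y * Mf i j y)); last first.
  by move=> i; rewrite (_ : (fun y => _) = Ef i * Mf i j) //; apply: differentiableM.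
by apply: eq_bigr => i _; rewrite d_mul.
Qed.

Lemma d_hshape (a Qf : V -> R) (c : R) x w :
  differentiable a x -> differentiable Qf x ->
  'd (fun y => a y + - (c * Qf y)) x w = 'd a x w + - (c * 'd Qf x w).
Proof.
move=> da dQ.
have dc : differentiable (fun _ : V => c) x := @differentiable_cst R V R c x.
have dcQ : differentiable (fun y => c * Qf y) x :=
  @differentiableM R V (fun _ => c) Qf x dc dQ.
have dN : differentiable (fun y => - (c * Qf y)) x :=
  @differentiableN R V R (fun y => c * Qf y) x dcQ.
rewrite (@d_add R V a (fun y => - (c * Qf y))) //.
rewrite (@d_opp R V (fun y => c * Qf y)) //.
rewrite (@d_mul R V (fun _ => c) Qf) //.
by rewrite d_cst mulr0 addr0.
Qed.

End Helpers.

Lemma quad_expand {R : realType} n (e a : 'cV[R]_n) (M : 'M[R]_n) :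
  (e^T *m M *m a) 0 0 = \sum_j (\sum_i e i 0 * M i j) * a j 0.
Proof.
rewrite mxE; apply: eq_bigr => j _; rewrite mxE; congr (_ * _).
by apply: eq_bigr => i _; rewrite mxE.
Qed.

Lemma quad_expand2 {R : realType} n (e a : 'cV[R]_n) (M : 'M[R]_n) :
  \sum_j e j 0 * (\sum_i M i j * a i 0) = (e^T *m (M^T *m a)) 0 0.
Proof.
rewrite mxE; apply: eq_bigr => j _; rewrite !mxE; congr (_ * _).
by apply: eq_bigr => i _; rewrite mxE.
Qed.

Lemma sqsum_gt0 {R : realType} m (r : 'rV[R]_m) : r != 0 -> 0 < (r *m r^T) 0 0.
Proof.
move=> rn0; rewrite mxE lt_def; apply/andP; split; last first.
  by apply: sumr_ge0 => k _; rewrite mxE -expr2 sqr_ge0.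
apply: contra rn0 => /eqP H; apply/eqP/matrixP => i k.
have nn : forall k' : 'I_m, true -> 0 <= r 0 k' * r^T k' 0.
  by move=> k' _; rewrite mxE -expr2 sqr_ge0.
have := @psumr_eq0P _ _ _ _ nn H k isT.
by rewrite !mxE (ord1 i) => /eqP; rewrite mulf_eq0 orbb => /eqP.
Qed.

Theorem theorem10 (R : realType) (n1 n2 m : nat)
  (Q1 : set 'cV[R]_n1) (Q2 : set 'cV[R]_n2)
  (D : 'cV[R]_(n1 + n2) -> 'M[R]_(n1 + n2))
  (H : 'cV[R]_(n1 + n2) -> 'cV[R]_(n1 + n2) -> 'cV[R]_(n1 + n2))
  (B1 : 'M[R]_(n1, m))
  (h01 : 'cV[R]_n1 -> R) (k01 : 'cV[R]_n1 -> 'cV[R]_n1)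
  (alpha : R -> R) (mu : R) :
  open Q1 -> open Q2 ->
  C1_on (cfg_dom Q1 Q2) D ->
  (forall q, cfg_dom Q1 Q2 q -> sym_posdef (D q)) ->
  pseudo_invertible B1 ->
  C1_on Q1 h01 ->
  C1_on Q1 k01 ->
  ext_class_Kinf alpha ->
  (forall q1, Q1 q1 -> - alpha (h01 q1) < 'd h01 q1 (k01 q1)) ->
  0 < mu ->
  is_CBF (state_dom Q1 Q2) (f_sys D H) (g_sys D B1) (h_cbf D h01 k01 mu).
Proof.
move=> oQ1 oQ2 HDc Hpd Hpi Hh01c Hk01c Halpha Hk mu0.
set Q := cfg_dom Q1 Q2; set X := state_dom Q1 Q2.
have oQ : open Q.
  have -> : Q = (@usubmx R n1 n2 1) @^-1` Q1 `&` (@dsubmx R n1 n2 1) @^-1` Q2 by [].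
  apply: openI; apply: open_comp => // ? _;
    [exact: continuous_usubmx|exact: continuous_dsubmx].
have oX : open X.
  have -> : X = (@usubmx R (n1 + n2) (n1 + n2) 1) @^-1` Q by [].
  by apply: open_comp => // ? _; exact: continuous_usubmx.
have uD q : Q q -> D q \in unitmx.
  by move=> /Hpd [_ Hq]; apply: quadpos_unit.
have uDd q : Q q -> drsubmx (D q) \in unitmx.
  by move=> /Hpd [_ Hq]; apply/quadpos_unit/quadpos_dr.
have HD : C1mx Q D := C1_on_C1mx _ _ oQ HDc.
have HM : C1mx Q (fun q => Dbar1 (D q)).
  rewrite /Dbar1; apply: (C1mx_sub _ oQ); first exact: (C1mx_ul _ _ _ _ _ _ HD).
  apply: (C1mx_mul _ oQ); last exact: (C1mx_dl _ _ _ _ _ _ HD).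
  apply: (C1mx_mul _ oQ); first exact: (C1mx_ur _ _ _ _ _ _ HD).
  by apply: (C1mx_inv _ oQ) => //; exact: (C1mx_dr _ _ _ _ _ _ HD).
have LL1 : Ldiff (fun y : 'cV[R]_((n1 + n2) + (n1 + n2)) => usubmx (usubmx y)).
  exact: (Ldiff_comp _ _ (Ldiff_usubmx _ _ _) (Ldiff_usubmx n1 n2 1)).
have LL2 : Ldiff (fun y : 'cV[R]_((n1 + n2) + (n1 + n2)) => usubmx (dsubmx y)).
  exact: (Ldiff_comp _ _ (Ldiff_dsubmx _ _ _) (Ldiff_usubmx n1 n2 1)).
have XQ1 y : X y -> Q1 (usubmx (usubmx y)) by case.
have HMx : C1mx X (fun y => Dbar1 (D (usubmx y))).
  have H' := C1mx_comp Q X _ _ oX (fun y Xy => Xy) (Ldiff_usubmx (n1 + n2) (n1 + n2) 1) HM.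
  exact H'.
have Hkx : C1mx X (fun y => k01 (usubmx (usubmx y))).
  have H' := C1mx_comp Q1 X _ _ oX XQ1 LL1 (C1_on_C1mx _ _ oQ1 Hk01c).
  exact H'.
have Hlx : C1mx X (fun y => usubmx (dsubmx y)) := C1mx_L _ _ oX LL2.
pose E (y : 'cV[R]_((n1 + n2) + (n1 + n2))) : 'cV[R]_n1 := usubmx (dsubmx y) - k01 (usubmx (usubmx y)).
have HE : C1mx X E := C1mx_sub _ oX _ _ _ _ Hlx Hkx.
have Hh01 := C1_on_C1p _ _ oQ1 Hh01c.
have Hh01x : C1p X (fun y => h01 (usubmx (usubmx y))) := C1p_comp _ _ _ _ oX XQ1 LL1 Hh01.
have HQ := C1mx_mul _ oX _ _ _ _ _ (C1mx_mul _ oX _ _ _ _ _ (C1mx_tr _ _ _ _ HE) HMx) HE.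
have Hh : C1p X (h_cbf D h01 k01 mu).
  apply: (C1p_ext (C1p_add oX Hh01x (C1p_opp oX (C1p_mul oX
    (C1p_cst X ((2 * mu)^-1)) (HQ 0 0))))) => y.
  by [].
split.
  split; first exact: Hh.1.
  move=> v; rewrite continuous_open_subspace // => y; rewrite inE => Xy.
  exact: Hh.2 v y Xy.
exists alpha; split => // x Xx.
set q := usubmx x.
have Qq : Q q := Xx.
pose c := (2 * mu)^-1.
pose Ef (i : 'I_n1) y := E y i 0.
pose Mf (i j : 'I_n1) (y : 'cV[R]_((n1 + n2) + (n1 + n2))) := Dbar1 (D (usubmx y)) i j.
pose Qf y := \sum_j (\sum_i Ef i y * Mf i j y) * Ef j y.
have hform : h_cbf D h01 k01 mu = fun y => h01 (usubmx (usubmx y)) + - (c * Qf y).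
  by apply/funext => y; rewrite /h_cbf /= quad_expand.
have dE i : differentiable (Ef i) x := (HE i 0).1 x Xx.
have dM i j : differentiable (Mf i j) x := (HMx i j).1 x Xx.
have dh01 : differentiable h01 (usubmx q) := Hh01.1 _ (XQ1 x Xx).
have dh w : 'd (h_cbf D h01 k01 mu) x w =
    'd h01 (usubmx q) (usubmx (usubmx w)) + - (c *
    \sum_j ((\sum_i Ef i x * Mf i j x) * 'd (Ef j) x w +
          Ef j x * \sum_i (Ef i x * 'd (Mf i j) x w + Mf i j x * 'd (Ef i) x w))).
  have [dQ eQ] := d_quad n1 Ef Mf x w dE dM.
  have [dA eA] := d_comp h01 (fun y => usubmx (usubmx y)) x w dh01 LL1.
  rewrite hform d_hshape //; first by rewrite -eQ -eA.
have [e0|en0] := eqVneq (E x) 0.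
  have Ef0 i : Ef i x = 0 by rewrite /Ef e0 mxE.
  have e1 : usubmx (dsubmx x) = k01 (usubmx q).
    by apply/eqP; rewrite -subr_eq0; apply/eqP.
  have hx : h_cbf D h01 k01 mu x = h01 (usubmx q).
    rewrite hform /= /Qf big1 ?mulr0 ?oppr0 ?addr0 // => j _.
    by rewrite Ef0 mulr0.
  apply: (@lt_le_trans _ _ ((Lie_f (h_cbf D h01 k01 mu) (f_sys D H) x +
     Lie_g (h_cbf D h01 k01 mu) (g_sys D B1) x 0)%:E)); last first.
    by apply: ereal_sup_ubound; exists 0.
  rewrite lte_fin /Lie_f /Lie_g mulmx0 linear0 addr0 dh.
  rewrite big1 ?mulr0 ?oppr0 ?addr0; last first.
    move=> j _; rewrite Ef0 mul0r addr0 big1 ?mul0r // => i _.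
    by rewrite Ef0 mul0r.
  by rewrite /f_sys col_mxKu e1 hx; apply: Hk; apply: XQ1.
have wu u : usubmx (g_sys D B1 x *m u) = 0.
  by rewrite /g_sys mul_col_mx col_mxKu mul0mx.
have wd u : dsubmx (g_sys D B1 x *m u) = invmx (D q) *m col_mx (B1 *m u) 0.
  by rewrite /g_sys mul_col_mx col_mxKd -mulmxA mul_col_mx mul0mx.
have dMw u i j : 'd (Mf i j) x (g_sys D B1 x *m u) = 0.
  have dMq : differentiable (fun z => Dbar1 (D z) i j) q := (HM i j).1 q Qq.
  have [_ e] := d_comp (fun z => Dbar1 (D z) i j) (@usubmx R (n1 + n2) (n1 + n2) 1)
    x (g_sys D B1 x *m u) dMq (Ldiff_usubmx _ _ _).
  by rewrite /Mf e wu linear0.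
have dEw u i : 'd (Ef i) x (g_sys D B1 x *m u) = (usubmx (dsubmx (g_sys D B1 x *m u))) i 0.
  have Efe : Ef i = fun y => coordf i 0 (usubmx (dsubmx y)) +
      - k01 (usubmx (usubmx y)) i 0.
    by apply/funext => y; rewrite /Ef /E /coordf !mxE.
  have [dco eco cco] := @Ldiff_coord R n1 1 i 0.
  have [dc1 ec1] := d_comp (coordf i 0) (fun y => usubmx (dsubmx y)) x
    (g_sys D B1 x *m u) (dco _) LL2.
  have dk : differentiable (fun z => k01 z i 0) (usubmx q) :=
    (C1_on_C1mx _ _ oQ1 Hk01c i 0).1 _ (XQ1 x Xx).
  have [dk1 ek1] := d_comp (fun z => k01 z i 0) (fun y => usubmx (usubmx y)) x
    (g_sys D B1 x *m u) dk LL1.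
  have dk2 := @differentiableN R _ R _ x dk1.
  have E1 := @d_add R _ (fun y => coordf i 0 (usubmx (dsubmx y)))
    (fun y => - (fun z => k01 z i 0) (usubmx (usubmx y))) x
    (g_sys D B1 x *m u) dc1 dk2.
  have E2 := @d_opp R _ (fun y => (fun z => k01 z i 0) (usubmx (usubmx y))) x
    (g_sys D B1 x *m u) dk1.
  cbv beta in E1, E2, ec1, ek1.
  rewrite Efe E1 E2 ec1 ek1 -[RHS]subr0; congr (_ - _); first exact: eco.
  rewrite wu [usubmx 0]linear0; exact: linear0.
pose a (u : 'cV[R]_m) : 'cV[R]_n1 := usubmx (dsubmx (g_sys D B1 x *m u)).
pose s (u : 'cV[R]_m) := ((E x)^T *m (B1 *m u)) 0 0.
have Ma u : Dbar1 (D q) *m a u = B1 *m u.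
  by rewrite /a wd schur //; [exact: uD|exact: uDd].
have Lg u : Lie_g (h_cbf D h01 k01 mu) (g_sys D B1) x u = - (c * (s u + s u)).
  rewrite /Lie_g dh wu [usubmx 0]linear0.
  rewrite (_ : 'd h01 (usubmx q) 0 = 0); last exact: linear0.
  rewrite add0r; congr (- (c * _)).
  rewrite (eq_bigr (fun j => (\sum_i Ef i x * Mf i j x) * a u j 0 +
                             Ef j x * \sum_i Mf i j x * a u i 0)); last first.
    move=> j _; rewrite (dEw u j); congr (_ + _ * _); apply: eq_bigr => i _.
    by rewrite (dMw u i j) (dEw u i) mulr0 add0r.
  rewrite big_split /=.
  have T1 : \sum_j (\sum_i Ef i x * Mf i j x) * a u j 0 = s u.
    by rewrite /Ef /Mf -quad_expand -mulmxA Ma.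
  have T2 : \sum_j Ef j x * (\sum_i Mf i j x * a u i 0) = s u.
    rewrite /Ef /Mf quad_expand2 Dbar1_sym ?Ma //.
    exact: (Hpd q Qq).1.
  by rewrite T1 T2.
have r0 : (E x)^T *m B1 != 0.
  apply: contra en0 => /eqP h; apply/eqP.
  by have := Hpi _ h; move=> /(congr1 trmx); rewrite trmxK trmx0.
pose u0 := ((E x)^T *m B1)^T.
have s0 : 0 < s u0 by rewrite /s mulmxA; exact: sqsum_gt0.
have c0 : 0 < c by rewrite /c invr_gt0 mulr_gt0.
have G0 : Lie_g (h_cbf D h01 k01 mu) (g_sys D B1) x u0 != 0.
  by rewrite Lg oppr_eq0 mulf_neq0 // ?lt0r_neq0 // addr_gt0.
set Lf := Lie_f (h_cbf D h01 k01 mu) (f_sys D H) x.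
set G := Lie_g (h_cbf D h01 k01 mu) (g_sys D B1) x u0.
pose t := (- alpha (h_cbf D h01 k01 mu x) - Lf + 1) / G.
have Lz : Lie_g (h_cbf D h01 k01 mu) (g_sys D B1) x (t *: u0) = t * G.
  by rewrite /G /Lie_g -scalemxAr linearZ.
apply: (@lt_le_trans _ _ ((Lf + Lie_g (h_cbf D h01 k01 mu) (g_sys D B1) x (t *: u0))%:E)).
  rewrite lte_fin Lz /t divfK //; lra.
by apply: ereal_sup_ubound; exists (t *: u0).
Qed.
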